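(* Let $0<\delta<1$, $t>1$, $\lambda_c:=1/(t^{1-\delta}-1)$, $\lambda_c\le\lambda\le t^{1-\delta}-1$, $0<k<t^{\delta-1}$, and let $\phi$ satisfy $0<\phi<\pi/2$ if $\ln\lambda\ge0$ and $0<\phi<\arctan(\pi/|\ln\lambda|)$ if $\ln\lambda<0$. When $z$ lies on the contour $\{z=1-k+R{\rm e}^{{\rm i}\phi}:0\le R<\infty\}$, the function $F(z;\lambda)$ has non-negative imaginary part.
   Context: $F(z;\lambda):=(1-z)\ln(1-z)+z\ln z+z\ln\lambda$, with branch cuts $(-\infty,0]$ and $[1,\infty)$. *)

(* Defs.v *)
From Stdlib Require Import Reals.
From Coquelicot Require Import Coquelicot.
Open Scope R_scope.

Definition Carg (w : C) : R :=
  let x := Re w in let y := Im w in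
  if Rlt_dec 0 x then atan (y / x)
  else if Rlt_dec x 0 then
    (if Rle_dec 0 y then atan (y / x) + PI else atan (y / x) - PI)
  else if Rlt_dec 0 y then PI / 2
  else if Rlt_dec y 0 then - (PI / 2)
  else 0.

Definition Clog (w : C) : C := (ln (Cmod w), Carg w).

(* F(z; lambda) = (1-z) Log(1-z) + z Log z + z ln lambda,
   with principal branches (cuts (-oo,0] for Log z and [1,oo) for Log(1-z)). *)
Definition Ffun (z : C) (lam : R) : C :=
  Cplus (Cplus (Cmult (Cminus (RtoC 1) z) (Clog (Cminus (RtoC 1) z)))
               (Cmult z (Clog z)))
        (Cmult z (RtoC (ln lam))).

Definition contour (k phi r : R) : C := (1 - k + r * cos phi, r * sin phi).

(* Main.v *)
Require Import Defs.
From Stdlib Require Import Reals Lra.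
From Coquelicot Require Import Coquelicot.
From Coquelicot Require Import Coquelicot.
Open Scope R_scope.
Ltac sq := solve [lra | nra | (apply Rgt_not_eq; lra) | (apply Rgt_not_eq; nra) | (apply Rplus_le_lt_0_compat; [apply Rle_0_sqr | nra]) | (apply Rplus_lt_le_0_compat; [nra | apply Rle_0_sqr]) | (apply Rgt_not_eq; apply Rplus_le_lt_0_compat; [apply Rle_0_sqr | nra]) | (apply Rgt_not_eq; apply Rplus_lt_le_0_compat; [nra | apply Rle_0_sqr])].

Definition fh k c s L r := (k - r*c) * atan (-(r*s)/(k - r*c)) + (1-k+r*c)*atan((r*s)/(1-k+r*c))
  + (r*s)*(L + (ln((1-k+r*c)*(1-k+r*c) + (r*s)*(r*s)) - ln((k-r*c)*(k-r*c)+(r*s)*(r*s)))/2).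
Definition Dh k c s L r := c*(atan((r*s)/(1-k+r*c)) - atan (-(r*s)/(k - r*c)))
  + s*(L + (ln((1-k+r*c)*(1-k+r*c) + (r*s)*(r*s)) - ln((k-r*c)*(k-r*c)+(r*s)*(r*s)))/2).
Definition fr k c s L r := (k - r*c) * (-(PI/2) + atan ((k - r*c)/(r*s))) + (1-k+r*c)*atan((r*s)/(1-k+r*c))
  + (r*s)*(L + (ln((1-k+r*c)*(1-k+r*c) + (r*s)*(r*s)) - ln((k-r*c)*(k-r*c)+(r*s)*(r*s)))/2).
Definition Dr k c s L r := c*(atan((r*s)/(1-k+r*c)) + PI/2 - atan ((k - r*c)/(r*s)))
  + s*(L + (ln((1-k+r*c)*(1-k+r*c) + (r*s)*(r*s)) - ln((k-r*c)*(k-r*c)+(r*s)*(r*s)))/2).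
Definition K1 k c s r :=
  (c*s*(1-k) + s*(c*(1-k+r*c) + s*(r*s)))/((1-k+r*c)*(1-k+r*c) + (r*s)*(r*s))
  + (c*s*k - s*(-c*(k-r*c) + s*(r*s)))/((k-r*c)*(k-r*c)+(r*s)*(r*s)).
Definition Ev k c s v := c*(atan(s/((1-k)*v+c)) - PI/2 - atan((k*v-c)/s))
  + s*((ln(((1-k)*v+c)*((1-k)*v+c) + s*s) - ln((k*v-c)*(k*v-c)+s*s))/2).
Definition E1 k c s v :=
  c*(-(s*(1-k))/(((1-k)*v+c)*((1-k)*v+c) + s*s) - k*s/((k*v-c)*(k*v-c)+s*s))
  + s*((1-k)*((1-k)*v+c)/(((1-k)*v+c)*((1-k)*v+c) + s*s) - k*(k*v-c)/((k*v-c)*(k*v-c)+s*s)).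

Lemma fr_der k c s L r : 0 < r -> 0 < s -> 0 < 1-k+r*c ->
  is_derive (fr k c s L) r (Dr k c s L r).
Proof.
  intros Hr Hs Hx. assert (0 < r*s) by nra. unfold fr, Dr.
  auto_derive.
  - assert (0 < r*s) by nra. repeat split; sq.
  - rewrite !Rmult_1_r. unfold Rminus, Rdiv.
    set (A1 := atan _). set (A2 := atan _). set (L1 := ln _). set (L2 := ln _).
    field; repeat split; sq.
Qed.

Lemma Dh_der k c s L r : 0 < k - r*c -> 0 < 1-k+r*c ->
  is_derive (Dh k c s L) r (K1 k c s r).
Proof.
  intros Ha Hx. unfold Dh, K1.
  auto_derive.
  - repeat split; sq.
  - rewrite !Rmult_1_r. unfold Rminus, Rdiv.
    field; repeat split; sq.
Qed.

Lemma Dr_der k c s L r : 0 < r -> 0 < s -> 0 < 1-k+r*c ->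
  is_derive (Dr k c s L) r (K1 k c s r).
Proof.
  intros Hr Hs Hx. assert (0 < r*s) by nra. unfold Dr, K1.
  auto_derive.
  - repeat split; sq.
  - rewrite !Rmult_1_r. unfold Rminus, Rdiv.
    field; repeat split; sq.
Qed.

Lemma Ev_der k c s v : 0 < s -> 0 < (1-k)*v+c ->
  is_derive (Ev k c s) v (E1 k c s v).
Proof.
  intros Hs Hx. unfold Ev, E1.
  auto_derive.
  - repeat split; sq.
  - rewrite !Rmult_1_r. unfold Rminus, Rdiv.
    field; repeat split; sq.
Qed.

Lemma K1_eq k c s r : c*c + s*s = 1 -> 0 < s -> 0 < 1-k+r*c ->
  0 < (k-r*c)*(k-r*c) + (r*s)*(r*s) ->
  K1 k c s r = (2*s*c*k*(1-k) - r*s*(1-2*k)) /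
   (((1-k+r*c)*(1-k+r*c) + (r*s)*(r*s)) * ((k-r*c)*(k-r*c)+(r*s)*(r*s))).
Proof.
  intros H Hs Hx H2. unfold K1.
  assert (0 < (1-k+r*c)*(1-k+r*c) + (r*s)*(r*s)) by sq.
  field_simplify; try lra. f_equal. replace (c^2) with (1 - s^2) by (rewrite <- H; ring). ring.


Qed.

Lemma E1_eq k c s v : c*c + s*s = 1 -> 0 < s ->
  E1 k c s v = s*v*((1-2*k) - 2*k*(1-k)*c*v) /
   ((((1-k)*v+c)*((1-k)*v+c) + s*s) * ((k*v-c)*(k*v-c)+s*s)).
Proof.
  intros H Hs. unfold E1.
  assert (0 < ((1-k)*v+c)*((1-k)*v+c) + s*s) by sq.
  assert (0 < (k*v-c)*(k*v-c)+s*s) by sq.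
  field_simplify; try lra.
  f_equal. replace (c^2) with (1 - s^2) by (rewrite <- H; ring). ring.
Qed.

Lemma fh_der k c s L r : 0 < k - r*c -> 0 < 1-k+r*c ->
  is_derive (fh k c s L) r (Dh k c s L r).
Proof.
  intros Ha Hx. unfold fh, Dh.
  auto_derive.
  - repeat split; sq.
  - rewrite !Rmult_1_r. unfold Rminus, Rdiv.
    set (A1 := atan _). set (A2 := atan _). set (L1 := ln _). set (L2 := ln _).
    field; repeat split; sq.
Qed.

Lemma incr (f df : R -> R) a b : a <= b ->
  (forall x, a <= x <= b -> is_derive f x (df x)) ->
  (forall x, a <= x <= b -> 0 <= df x) -> f a <= f b.
Proof.
  intros Hab Hd Hp.
  destruct (MVT_gen f a b df) as [x [Hx Hm]].
  - intros x Hx. rewrite Rmin_left in Hx by lra. rewrite Rmax_right in Hx by lra.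
    apply Hd; lra.
  - intros x Hx. rewrite Rmin_left in Hx by lra. rewrite Rmax_right in Hx by lra.
    apply continuity_pt_filterlim.
    apply (ex_derive_continuous (K:=R_AbsRing) (V:=R_NormedModule)).
    eexists. apply Hd; lra.
  - rewrite Rmin_left in Hx by lra. rewrite Rmax_right in Hx by lra.
    assert (0 <= df x * (b - a)) by (apply Rmult_le_pos; [apply Hp; lra | lra]).
    lra.
Qed.

Lemma atan_id a y : 0 < a -> 0 < y -> atan (-y/a) = -(PI/2) + atan (a/y).
Proof.
  intros Ha Hy.
  replace (-y/a) with (- (/ (a/y))) by (field; lra).
  rewrite atan_opp, atan_inv. ring. apply Rdiv_lt_0_compat; lra.
Qed.

Lemma carg_pos x y : 0 < x -> Carg (x, y) = atan (y / x).
Proof.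
  intros Hx. unfold Carg. simpl. destruct (Rlt_dec 0 x); [reflexivity | lra].
Qed.

Lemma carg_negim a y : 0 < y -> Carg (a, -y) = -(PI/2) + atan (a / y).
Proof.
  intros Hy. unfold Carg. simpl.
  destruct (Rlt_dec 0 a) as [Ha|Ha].
  - apply atan_id; lra.
  - destruct (Rlt_dec a 0) as [Ha'|Ha'].
    + destruct (Rle_dec 0 (-y)) as [Hy'|Hy']; [lra|].
      replace (-y/a) with (/ ((-a)/y)) by (field; lra).
      rewrite atan_inv. replace (-a/y) with (-(a/y)) by (field; lra).
      rewrite atan_opp. lra. apply Rdiv_lt_0_compat; lra.
    + assert (a = 0) by lra. subst a.
      destruct (Rlt_dec 0 (-y)); [lra|].
      destruct (Rlt_dec (-y) 0); [|lra].
      replace (0/y) with 0 by (field; lra). rewrite atan_0. ring.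
Qed.

Lemma ln_sqrt' u : 0 < u -> ln (sqrt u) = ln u / 2.
Proof.
  intros Hu. rewrite <- (sqrt_sqrt u) at 2 by lra.
  rewrite ln_mult by (apply sqrt_lt_R0; lra). field.
Qed.

Lemma ImF_eq k phi lam r :
  0 < (k - r*cos phi)*(k - r*cos phi) + (r*sin phi)*(r*sin phi) ->
  0 < (1-k+r*cos phi)*(1-k+r*cos phi) + (r*sin phi)*(r*sin phi) ->
  Im (Ffun (contour k phi r) lam) =
  (k - r*cos phi) * Carg (k - r*cos phi, -(r*sin phi))
  + (1-k+r*cos phi) * Carg (1-k+r*cos phi, r*sin phi)
  + (r*sin phi)*(ln lam + (ln((1-k+r*cos phi)*(1-k+r*cos phi) + (r*sin phi)*(r*sin phi))
       - ln((k-r*cos phi)*(k-r*cos phi)+(r*sin phi)*(r*sin phi)))/2).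
Proof.
  intros H1 H2.
  unfold Ffun, contour.
  replace (Cminus (RtoC 1) (1 - k + r * cos phi, r * sin phi)) with (k - r*cos phi, -(r*sin phi)).
  2:{ apply injective_projections; simpl; ring. }
  unfold Clog, Cmod. simpl.
  rewrite !Rmult_1_r.
  replace (- (r * sin phi) * - (r * sin phi)) with ((r * sin phi) * (r * sin phi)) by ring.
  rewrite !ln_sqrt' by assumption.
  set (C1 := Carg _). set (C2 := Carg _). set (L1 := ln (_ + _)). set (L2 := ln (_ + _)). field. Qed.

Lemma Ev0 k c s : 0 < c -> 0 < s -> Ev k c s 0 = 0.
Proof.
  intros Hc Hs. unfold Ev.
  replace (((1 - k) * 0 + c) * ((1 - k) * 0 + c) + s * s) with (c*c+s*s) by ring.
  replace ((k * 0 - c) * (k * 0 - c) + s * s) with (c*c+s*s) by ring.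
  replace (s / ((1 - k) * 0 + c)) with (/ (c/s)) by (field; lra).
  replace ((k * 0 - c) / s) with (- (c/s)) by (field; lra).
  rewrite atan_inv, atan_opp by (apply Rdiv_lt_0_compat; lra).
  field.
Qed.

Lemma Dr_Ev k c s L r : 0 < r -> 0 < c -> 0 < s -> 0 < 1 - k ->
  Dr k c s L r = c*PI + s*L + Ev k c s (/r).
Proof.
  intros Hr Hc Hs Hk. unfold Dr, Ev.
  assert (0 < (1-k) * /r) by (apply Rmult_lt_0_compat; [lra | apply Rinv_0_lt_compat; lra]).
  replace (r * s / (1 - k + r * c)) with (s / ((1 - k) * / r + c)) by (field; split; nra).
  replace ((k - r * c) / (r * s)) with ((k * / r - c) / s) by (field; lra).
  replace ((1 - k + r * c) * (1 - k + r * c) + r * s * (r * s)) with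
    ((r*r) * (((1 - k) * / r + c) * ((1 - k) * / r + c) + s * s)) by (field; lra).
  replace ((k - r * c) * (k - r * c) + r * s * (r * s)) with
    ((r*r) * ((k * / r - c) * (k * / r - c) + s * s)) by (field; lra).
  rewrite !ln_mult by sq.
  field.
Qed.

Lemma Dr_pos k c s L r : 0 < k -> 2*k < 1 -> 0 < c -> 0 < s -> c*c + s*s = 1 ->
  0 < c*PI + s*L -> 0 <= Dh k c s L 0 -> 0 < r -> 0 <= Dr k c s L r.
Proof.
  intros Hk Hk2 Hc Hs Hcs HP H0 Hr.
  destruct (Rle_lt_dec (r*(1-2*k)) (2*c*k*(1-k))) as [Hle|Hlt].
  - set (r1 := Rmin r (k/(2*c))).
    assert (Hr1a : r1 <= r) by apply Rmin_l.
    assert (Hr1b : r1 <= k/(2*c)) by apply Rmin_r.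
    assert (Hr1c : 0 < r1) by (apply Rmin_glb_lt; [lra | apply Rdiv_lt_0_compat; lra]).
    assert (Hr1d : r1 * c <= k/2).
    { apply Rle_trans with (k/(2*c)*c). apply Rmult_le_compat_r; lra.
      right; field; lra. }
    assert (HK : forall x, 0 <= x <= r -> 0 < (k-x*c)*(k-x*c) + (x*s)*(x*s) -> 0 <= K1 k c s x).
    { intros x Hx Hq. rewrite K1_eq; try assumption; try nra.
      apply Rmult_le_pos.
      - assert (x*(1-2*k) <= r*(1-2*k)) by (apply Rmult_le_compat_r; lra). nra.
      - apply Rlt_le, Rinv_0_lt_compat. apply Rmult_lt_0_compat; [|assumption]. nra. }
    assert (A1 : Dh k c s L 0 <= Dh k c s L r1).
    { apply (incr _ (K1 k c s)). lra.
      - intros x Hx. apply Dh_der. nra. nra.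
      - intros x Hx. apply HK. lra. assert (0 < k - x*c) by nra. nra. }
    assert (A2 : Dr k c s L r1 <= Dr k c s L r).
    { apply (incr _ (K1 k c s)). lra.
      - intros x Hx. apply Dr_der; nra.
      - intros x Hx. apply HK. lra. assert (0 < x*s) by nra. sq. }
    assert (A3 : Dh k c s L r1 = Dr k c s L r1).
    { unfold Dh, Dr. rewrite atan_id by nra. field. }
    lra.
  - rewrite Dr_Ev by lra.
    assert (Ev k c s 0 <= Ev k c s (/r)).
    { apply (incr _ (E1 k c s)).
      - apply Rlt_le, Rinv_0_lt_compat; lra.
      - intros v Hv. apply Ev_der. lra. nra.
      - intros v Hv. rewrite E1_eq by assumption.
        assert (v * r <= 1).
        { replace 1 with (/r * r) by (field; lra). apply Rmult_le_compat_r; lra. }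
        assert (0 <= (1 - 2*k) - 2*k*(1-k)*c*v).
        { assert (0 <= r*((1 - 2*k) - 2*k*(1-k)*c*v)).
          { assert (0 <= 2*k*(1-k)*c) by (repeat apply Rmult_le_pos; lra).
            nra. }
          nra. }
        apply Rmult_le_pos.
        + apply Rmult_le_pos; [|assumption]. apply Rmult_le_pos; lra.
        + apply Rlt_le, Rinv_0_lt_compat. apply Rmult_lt_0_compat; sq. }
    rewrite Ev0 in H by lra. lra.
Qed.

Lemma ImF_pos k phi lam r : 0 < k -> 2*k < 1 -> 0 < cos phi -> 0 < sin phi ->
  0 < cos phi * PI + sin phi * ln lam -> 0 <= Dh k (cos phi) (sin phi) (ln lam) 0 ->
  0 <= r -> 0 <= Im (Ffun (contour k phi r) lam).
Proof.
  intros Hk Hk2 Hc Hs HP H0 Hr.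
  assert (Hcs : cos phi * cos phi + sin phi * sin phi = 1).
  { pose proof (sin2_cos2 phi) as E. unfold Rsqr in E. lra. }
  set (c := cos phi) in *. set (s := sin phi) in *. set (L := ln lam) in *.
  set (r1 := Rmin r (k/(2*c))).
  assert (Hr1a : r1 <= r) by apply Rmin_l.
  assert (Hr1b : r1 <= k/(2*c)) by apply Rmin_r.
  assert (Hr1c : 0 <= r1) by (apply Rmin_glb; [lra | apply Rlt_le, Rdiv_lt_0_compat; lra]).
  assert (Hr1d : r1 * c <= k/2).
  { apply Rle_trans with (k/(2*c)*c). apply Rmult_le_compat_r; lra.
    right; field; lra. }
  assert (Hf0 : fh k c s L 0 = 0).
  { unfold fh. replace (-(0*s)/(k-0*c)) with 0 by (field; lra).
    replace ((0*s)/(1-k+0*c)) with 0 by (field; lra). rewrite atan_0. field. }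
  assert (A1 : fh k c s L 0 <= fh k c s L r1).
  { apply (incr _ (Dh k c s L)). lra.
    - intros x Hx. apply fh_der; nra.
    - intros x Hx. destruct (Req_dec x 0) as [->|Hx0]. assumption.
      replace (Dh k c s L x) with (Dr k c s L x).
      apply Dr_pos; try assumption; lra.
      unfold Dh, Dr. rewrite atan_id by nra. field. }
  destruct (Rle_lt_dec r (k/(2*c))) as [Hle|Hlt].
  - assert (r1 = r) by (unfold r1; apply Rmin_left; lra).
    assert (r*c <= k/2) by (rewrite <- H; exact Hr1d).
    assert (0 < k - r*c) by lra. assert (0 < 1 - k + r*c) by nra.
    rewrite ImF_eq; fold c s L.
    2: sq. 2: sq.
    rewrite carg_pos by nra. rewrite carg_pos by nra.
    change (0 <= fh k c s L r). rewrite <- H. lra.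
  - assert (r1 = k/(2*c)) by (unfold r1; apply Rmin_right; lra).
    assert (0 < r1) by (rewrite H; apply Rdiv_lt_0_compat; lra).
    assert (A2 : fr k c s L r1 <= fr k c s L r).
    { apply (incr _ (Dr k c s L)). lra.
      - intros x Hx. apply fr_der; nra.
      - intros x Hx. apply Dr_pos; try assumption; lra. }
    assert (A3 : fh k c s L r1 = fr k c s L r1).
    { unfold fh, fr. rewrite atan_id by nra. field. }
    assert (0 < r*s) by nra.
    assert (0 < 1 - k + r*c) by nra.
    rewrite ImF_eq; fold c s L.
    2: sq. 2: sq.
    rewrite carg_negim by nra. rewrite carg_pos by nra.
    change (0 <= fr k c s L r). lra.
Qed.

Theorem lemma4p5 (delta t lam k phi r : R) :
  0 < delta < 1 ->
  1 < t ->
  1 / (Rpower t (1 - delta) - 1) <= lam ->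
  lam <= Rpower t (1 - delta) - 1 ->
  0 < k < Rpower t (delta - 1) ->
  (0 <= ln lam -> 0 < phi < PI / 2) ->
  (ln lam < 0 -> 0 < phi < atan (PI / Rabs (ln lam))) ->
  0 <= r ->
  0 <= Im (Ffun (contour k phi r) lam).
Proof.
  intros Hd Ht Hl1 Hl2 Hk Hp1 Hp2 Hr.
  set (T := Rpower t (1 - delta)) in *.
  assert (HT1 : 1 < T).
  { assert (H : Rpower t 0 < Rpower t (1 - delta)) by (apply Rpower_lt; lra). rewrite Rpower_O in H by lra. exact H. }
  assert (HTi : Rpower t (delta - 1) = / T).
  { unfold T. rewrite <- Rpower_Ropp. f_equal. ring. }
  rewrite HTi in Hk.
  assert (Hlam0 : 0 < lam).
  { apply Rlt_le_trans with (1 / (T - 1)); [apply Rdiv_lt_0_compat; lra | lra]. }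
  assert (HlT : 1 <= lam * (T - 1)).
  { apply Rmult_le_compat_r with (r := T - 1) in Hl1; [|lra].
    replace (1 / (T - 1) * (T - 1)) with 1 in Hl1 by (field; lra). lra. }
  assert (HT2 : 2 <= T) by nra.
  assert (HkT : k * T < 1).
  { destruct Hk as [_ Hk]. apply Rmult_lt_compat_r with (r := T) in Hk; [|lra].
    rewrite Rinv_l in Hk by lra. lra. }
  assert (Hk2 : 2 * k < 1) by nra.
  assert (Hphi : 0 < phi < PI / 2).
  { destruct (Rle_lt_dec 0 (ln lam)) as [H|H]. auto.
    specialize (Hp2 H). pose proof (atan_bound (PI / Rabs (ln lam))). lra. }
  assert (Hc : 0 < cos phi) by (apply cos_gt_0; lra).
  assert (Hs : 0 < sin phi) by (apply sin_gt_0; lra).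
  apply ImF_pos; try lra.
  - destruct (Rle_lt_dec 0 (ln lam)) as [H|H].
    + pose proof PI_RGT_0. nra.
    + specialize (Hp2 H).
      pose proof (atan_bound (PI / Rabs (ln lam))).
      assert (Htan : tan phi < PI / Rabs (ln lam)).
      { rewrite <- (tan_atan (PI / Rabs (ln lam))).
        apply tan_increasing; lra. }
      rewrite Rabs_left in Htan by lra. unfold tan in Htan.
      apply Rmult_lt_compat_r with (r := cos phi * (- ln lam)) in Htan.
      2: { apply Rmult_lt_0_compat; lra. }
      replace (sin phi / cos phi * (cos phi * - ln lam)) with (- (sin phi * ln lam)) in Htan by (field; lra).
      replace (PI / - ln lam * (cos phi * - ln lam)) with (cos phi * PI) in Htan by (field; lra).
      lra.
  - unfold Dh.
    replace (0 * sin phi / (1 - k + 0 * cos phi)) with 0 by (field; lra).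
    replace (- (0 * sin phi) / (k - 0 * cos phi)) with 0 by (field; lra).
    replace ((1 - k + 0 * cos phi) * (1 - k + 0 * cos phi) + 0 * sin phi * (0 * sin phi))
      with ((1-k)*(1-k)) by ring.
    replace ((k - 0 * cos phi) * (k - 0 * cos phi) + 0 * sin phi * (0 * sin phi))
      with (k*k) by ring.
    rewrite !ln_mult by lra.
    assert (k <= lam * (1 - k)).
    { assert (0 < (lam * (1 - k) - k) * (T - 1)) by nra.
      apply Rlt_le. apply Rminus_lt_0. 
      apply (Rmult_lt_reg_r (T - 1)); lra. }
    assert (ln k <= ln lam + ln (1 - k)).
    { rewrite <- ln_mult by lra. apply ln_le; lra. }
    replace (cos phi * (atan 0 - atan 0)) with 0 by ring.
    rewrite Rplus_0_l. apply Rmult_le_pos; lra.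
Qed.
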